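(* Let $X \subseteq \mathbb{P}^r$ be a projective variety of dimension $n$ over $\mathbb{C}$, and $p \in X$ a closed point. Suppose $m$ is a positive integer such that $\mathfrak{m}_{X,p}^m \subseteq J$ for every minimal reduction $J$ of $\mathfrak{m}_{X,p}$. If $L\subseteq\mathbb{P}^r$ is a reduction linear subspace at $(X,p)$, then $ll(\mathcal{O}_{X\cap L,p}) \leq m-1$.
   Context: For an Artinian local ring $(A,\mathfrak{m})$, the Loewy length is $ll(A):=\max\{i\mid \mathfrak{m}^i\neq 0\}$ (with $ll(A)=0$ if $A$ is a field). For a Noetherian local ring $(R,\mathfrak{m})$, an ideal $J\subseteq\mathfrak{m}$ is a reduction of $\mathfrak{m}$ if $\mathfrak{m}^{k+1}=J\mathfrak{m}^k$ for some $k\geq 0$; a minimal reduction is a reduction minimal with respect to inclusion. For $p\in X$ and a linear subspace $L\subseteq\mathbb{P}^r$ through $p$ cut out by linear forms $l_1,\dots,l_k$, let $\bar l_i\in\mathfrak{m}_{X,p}$ be their images (via $\mathfrak{m}_{X,p}=\mathfrak{m}_{\mathbb{P}^r,p}/I_{X,p}$); $L$ is a reduction linear subspace at $(X,p)$ if $(\bar l_1,\dots,\bar l_k)$ is a reduction of $\mathfrak{m}_{X,p}$. $X\cap L$ is the scheme-theoretic intersection. *)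

(* Defs.v *)
From HB Require Import structures.
From mathcomp Require Import all_boot all_order all_algebra.
From mathcomp Require Import reals complex mpoly.
Set Implicit Arguments.
Unset Strict Implicit.
Unset Printing Implicit Defensive.
Import Order.TTheory GRing.Theory Num.Theory.
Local Open Scope ring_scope.

(* Throughout: C := complex R (R : realType), P^r has homogeneous coordinate
   ring S = {mpoly C[r.+1]}, and all local rings at a point of P^r are
   realised inside the fraction field Frac(S) = {fraction S}.              *)

Notation homcoord R r := {mpoly (complex R)[r.+1]}.
Notation fracfield R r := {fraction (homcoord R r)}.

Definition tofrac (R : realType) (r : nat) (f : homcoord R r) : fracfield R r :=
  @FracField.tofrac (homcoord R r) f.
Local Notation "x %:F" := (tofrac x).

Definition is_ideal (R : realType) (r : nat) (I : pred (homcoord R r)) : Prop :=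
  [/\ 0 \in I,
      (forall f g, f \in I -> g \in I -> f + g \in I) &
      (forall a f, f \in I -> a * f \in I)].

Definition is_homogeneous_ideal (R : realType) (r : nat)
    (I : pred (homcoord R r)) : Prop :=
  is_ideal I /\ forall f d, f \in I -> pihomog mdeg d f \in I.

Definition is_prime_ideal (R : realType) (r : nat) (I : pred (homcoord R r)) : Prop :=
  is_ideal I /\ 1 \notin I /\
  forall f g, f * g \in I -> f \in I \/ g \in I.

(* X = V_+(I) subset P^r is a projective variety: I homogeneous prime.     *)
Definition projective_variety (R : realType) (r : nat) (I : pred (homcoord R r)) : Prop :=
  is_homogeneous_ideal I /\ is_prime_ideal I.

(* x : C^{r+1} \ {0} represents the closed point [x] of P^r *)
Definition proj_point (R : realType) (r : nat) (x : 'I_r.+1 -> complex R) : Prop :=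
  exists i, x i != 0.

Definition point_of (R : realType) (r : nat) (I : pred (homcoord R r))
    (x : 'I_r.+1 -> complex R) : Prop :=
  proj_point x /\ forall f, f \in I -> f.@[x] = 0.

Definition loc_ring (R : realType) (r : nat) (x : 'I_r.+1 -> complex R)
    (u : fracfield R r) : Prop :=
  exists (d : nat) (f g : homcoord R r),
    [/\ f \is d.-homog, g \is d.-homog, g.@[x] != 0 & u = f%:F / g%:F].

Definition loc_max (R : realType) (r : nat) (x : 'I_r.+1 -> complex R)
    (u : fracfield R r) : Prop :=
  exists (d : nat) (f g : homcoord R r),
    [/\ f \is d.-homog, g \is d.-homog, g.@[x] != 0, f.@[x] = 0
      & u = f%:F / g%:F].

Definition loc_ideal_of (R : realType) (r : nat) (I : pred (homcoord R r))
    (x : 'I_r.+1 -> complex R) (u : fracfield R r) : Prop :=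
  exists (d : nat) (f g : homcoord R r),
    [/\ f \is d.-homog, g \is d.-homog, g.@[x] != 0, f \in I
      & u = f%:F / g%:F].

Section IdealCalculus.
Variables (R : realType) (r : nat).
Local Notation F := (fracfield R r).

Definition subI (A B : F -> Prop) : Prop := forall u, A u -> B u.
Definition eqI (A B : F -> Prop) : Prop := forall u, A u <-> B u.

Definition ideal_in (O A : F -> Prop) : Prop :=
  [/\ subI A O, A 0,
      (forall u v, A u -> A v -> A (u + v)) &
      (forall a u, O a -> A u -> A (a * u))].

Definition sumI (A B : F -> Prop) (u : F) : Prop :=
  exists a b, [/\ A a, B b & u = a + b].

Definition prodI (A B : F -> Prop) (u : F) : Prop :=
  exists (k : nat) (a b : 'I_k -> F),
    (forall i, A (a i) /\ B (b i)) /\ u = \sum_(i < k) a i * b i.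

Fixpoint powI (O A : F -> Prop) (k : nat) : F -> Prop :=
  match k with
  | 0 => O
  | k'.+1 => prodI A (powI O A k')
  end.

Definition genI (O : F -> Prop) (k : nat) (g : 'I_k -> F) (u : F) : Prop :=
  exists c : 'I_k -> F, (forall i, O (c i)) /\ u = \sum_(i < k) c i * g i.

End IdealCalculus.

(* Ideals of the quotient O_{X,x} are identified with the ideals of O_{P^r,x}
   containing I_{X,x}; the image of an ideal A of O_{P^r,x} in O_{X,x}
   corresponds to A + I_{X,x}.  m_{X,x} corresponds to m_{P^r,x}.           *)

Section LocalX.
Variables (R : realType) (r : nat) (I : pred (homcoord R r))
          (x : 'I_r.+1 -> complex R).
Local Notation O := (loc_ring x).
Local Notation IX := (loc_ideal_of I x).
Local Notation mP := (loc_max x).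

Definition idealX_in_max (J : fracfield R r -> Prop) : Prop :=
  [/\ ideal_in O J, subI IX J & subI J mP].

Definition reductionX (J : fracfield R r -> Prop) : Prop :=
  idealX_in_max J /\
  exists k : nat,
    eqI (sumI (powI O mP k.+1) IX) (sumI (prodI J (powI O mP k)) IX).

Definition minimal_reductionX (J : fracfield R r -> Prop) : Prop :=
  reductionX J /\
  forall J', reductionX J' -> subI J' J -> subI J J'.

(* the affine chart used to dehomogenise: h = x_j for the first j with
   x_j <> 0; the image of a linear form l in m_{X,x} is l/h *)
Definition chart_index : 'I_r.+1 :=
  odflt ord0 [pick j | x j != 0].

Definition lbar (l : homcoord R r) : fracfield R r :=
  l%:F / ('X_chart_index)%:F.

(* the ideal (lbar_1, ..., lbar_k) of O_{X,x}, i.e. the ideal of X cap L at x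
   (as an ideal of O_{P^r,x} containing I_{X,x}) *)
Definition lin_idealX (k : nat) (l : 'I_k -> homcoord R r) : fracfield R r -> Prop :=
  sumI (genI O (fun i => lbar (l i))) IX.

(* L = V_+(l_1,...,l_k) is a linear subspace through [x] *)
Definition linear_subspace_through (k : nat) (l : 'I_k -> homcoord R r) : Prop :=
  forall i, l i \is 1.-homog /\ (l i).@[x] = 0.

Definition reduction_linear_subspace (k : nat) (l : 'I_k -> homcoord R r) : Prop :=
  linear_subspace_through l /\ reductionX (lin_idealX l).

(* ll(O_{X,x}/K) <= b, where K is an ideal of O_{X,x} (an ideal of
   O_{P^r,x} containing I_{X,x}):  every i with (m/K)^i <> 0, i.e. with
   m^i not contained in K, satisfies i <= b. *)
Definition loewy_length_le (K : fracfield R r -> Prop) (b : nat) : Prop :=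
  forall i : nat, ~ subI (powI O mP i) K -> (i <= b)%N.

End LocalX.

(* Main.v *)
Require Import Defs.
From HB Require Import structures.
From mathcomp Require Import all_boot all_order all_algebra.
From mathcomp Require Import reals complex mpoly.
From mathcomp Require Import ring zify.
From Stdlib Require Import Classical.
Import GRing.Theory Num.Theory.
Local Open Scope ring_scope.

Module Gen.
Set Implicit Arguments.
Unset Strict Implicit.
Section Abstract.
Variable F : fieldType.

Definition subI (A B : F -> Prop) : Prop := forall u, A u -> B u.
Definition eqI (A B : F -> Prop) : Prop := forall u, A u <-> B u.
Definition sumI (A B : F -> Prop) (u : F) : Prop :=
  exists a b, [/\ A a, B b & u = a + b].
Definition prodI (A B : F -> Prop) (u : F) : Prop :=
  exists (k : nat) (a b : 'I_k -> F),
    (forall i, A (a i) /\ B (b i)) /\ u = \sum_(i < k) a i * b i.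
Definition ideal_in (O A : F -> Prop) : Prop :=
  [/\ subI A O, A 0,
      (forall u v, A u -> A v -> A (u + v)) &
      (forall a u, O a -> A u -> A (a * u))].
Fixpoint powI (O A : F -> Prop) (k : nat) : F -> Prop :=
  match k with
  | 0 => O
  | k'.+1 => prodI A (powI O A k')
  end.
Definition genI (O : F -> Prop) (k : nat) (g : 'I_k -> F) (u : F) : Prop :=
  exists c : 'I_k -> F, (forall i, O (c i)) /\ u = \sum_(i < k) c i * g i.
Variables (O mP IX : F -> Prop).
Implicit Types (A B T S N J C : F -> Prop) (s p q G GA GB : seq F).
Hypothesis O0 : O 0.
Hypothesis O1 : O 1.
Hypothesis ON1 : O (-1).
Hypothesis OD : forall u v, O u -> O v -> O (u + v).
Hypothesis OM : forall u v, O u -> O v -> O (u * v).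
Hypothesis mPO : forall u, mP u -> O u.
Hypothesis mP0 : mP 0.
Hypothesis mPD : forall u v, mP u -> mP v -> mP (u + v).
Hypothesis mPM : forall a u, O a -> mP u -> mP (a * u).
Hypothesis mP1 : ~ mP 1.
Hypothesis Ounit : forall u, O u -> ~ mP u -> O u^-1 /\ u != 0.
Hypothesis IXmP : forall u, IX u -> mP u.
Hypothesis IX0 : IX 0.
Hypothesis IXD : forall u v, IX u -> IX v -> IX (u + v).
Hypothesis IXM : forall a u, O a -> IX u -> IX (a * u).

Definition Mod (A : F -> Prop) :=
  [/\ A 0, (forall u v, A u -> A v -> A (u + v)) & (forall a u, O a -> A u -> A (a * u))].

Lemma ModN A u : Mod A -> A u -> A (- u).
Proof. by case=> _ _ HM Hu; rewrite -mulN1r; apply: HM. Qed.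

Lemma ModB A u v : Mod A -> A u -> A v -> A (u - v).
Proof. move=> HA Hu Hv; case: (HA) => _ HD _; apply: HD => //; exact: ModN. Qed.

Lemma Mod_O : Mod O. Proof. by split. Qed.
Lemma Mod_mP : Mod mP. Proof. by split. Qed.
Lemma Mod_IX : Mod IX. Proof. by split. Qed.

Lemma Mod_sum A B : Mod A -> Mod B -> Mod (sumI A B).
Proof.
case=> A0 AD AM [B0 BD BM]; split.
- by exists 0, 0; rewrite addr0.
- move=> u v [a [b [Ha Hb ->]]] [a' [b' [Ha' Hb' ->]]].
  by exists (a + a'), (b + b'); split; [exact: AD|exact: BD|ring].
- move=> c u Hc [a [b [Ha Hb ->]]].
  by exists (c * a), (c * b); split; [exact: AM|exact: BM|ring].
Qed.

Lemma sum_sub A B T : Mod T -> subI A T -> subI B T -> subI (sumI A B) T.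
Proof. by case=> _ TD _ HA HB u [a [b [Ha Hb ->]]]; apply: TD; [apply: HA|apply: HB]. Qed.

Lemma sumIl A B u : Mod B -> A u -> sumI A B u.
Proof. by case=> B0 _ _ Hu; exists u, 0; rewrite addr0. Qed.
Lemma sumIr A B u : Mod A -> B u -> sumI A B u.
Proof. by case=> A0 _ _ Hu; exists 0, u; rewrite add0r. Qed.

Fixpoint spanP (C : F -> Prop) (s : seq F) (u : F) : Prop :=
  match s with
  | [::] => u = 0
  | g :: s' => exists c, C c /\ spanP C s' (u - c * g)
  end.

Lemma Mod_span C s : Mod C -> Mod (spanP C s).
Proof.
move=> [C0 CD CM]; elim: s => [|g s IH] /=.
  by split => //; [move=> u v -> ->; rewrite addr0|move=> a u _ ->; rewrite mulr0].
case: IH => S0 SD SM; split.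
- by exists 0; split => //; rewrite mul0r subr0.
- move=> u v [c [Hc Hu]] [c' [Hc' Hv]]; exists (c + c'); split; first exact: CD.
  by have := SD _ _ Hu Hv; congr spanP; ring.
- move=> a u Ha [c [Hc Hu]]; exists (a * c); split; first exact: CM.
  by have := SM _ _ Ha Hu; congr spanP; ring.
Qed.

Lemma span_mem s g : g \in s -> spanP O s g.
Proof.
elim: s => [//|h s IH] /=; rewrite inE => /orP [/eqP ->|Hg].
  by exists 1; split => //; rewrite mul1r subrr; case: (Mod_span s Mod_O).
by exists 0; split => //; rewrite mul0r subr0; apply: IH.
Qed.

Lemma span_sub C s A : Mod A -> (forall c, C c -> O c) -> (forall g, g \in s -> A g) ->
  subI (spanP C s) A.
Proof.
move=> [A0 AD AM] CO; elim: s => [|g s IH] Hs u /=; first by move->.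
move=> [c [Hc Hu]]; have -> : u = (u - c * g) + c * g by ring.
apply: AD; first by apply: IH => // h Hh; apply: Hs; rewrite inE Hh orbT.
by apply: AM; [exact: CO|apply: Hs; rewrite inE eqxx].
Qed.


Lemma span_subO s A : Mod A -> (forall g, g \in s -> A g) -> subI (spanP O s) A.
Proof. by move=> HA Hs; apply: span_sub. Qed.

Lemma span_mono s1 s2 : (forall g, g \in s1 -> g \in s2) -> subI (spanP O s1) (spanP O s2).
Proof. by move=> H; apply: span_subO; [exact: Mod_span _ Mod_O|move=> g /H; apply: span_mem]. Qed.

Lemma prodI_sub A B T : T 0 -> (forall u v, T u -> T v -> T (u + v)) ->
  (forall a b, A a -> B b -> T (a * b)) -> subI (prodI A B) T.
Proof.
move=> T0 TD Hab u [k [a [b [Hi ->]]]]; apply: big_ind => // i _.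
by case: (Hi i) => *; apply: Hab.
Qed.

Lemma prodI_mul A B a b : A a -> B b -> prodI A B (a * b).
Proof. by move=> Ha Hb; exists 1%N, (fun _ => a), (fun _ => b); split => //; rewrite big_ord1. Qed.

Lemma Mod_prodI A B : (forall c a, O c -> A a -> A (c * a)) -> Mod (prodI A B).
Proof.
move=> HA; split.
- by exists 0%N, (fun _ => 0), (fun _ => 0); split; [case|rewrite big_ord0].
- move=> u v [k [a [b [Hi ->]]]] [k' [a' [b' [Hi' ->]]]].
  exists (k + k')%N, (fun i => match split i with inl j => a j | inr j => a' j end),
    (fun i => match split i with inl j => b j | inr j => b' j end).
  split; first by move=> i; case: (split i) => j; [exact: Hi|exact: Hi'].
  rewrite big_split_ord /=; congr (_ + _); apply: eq_bigr => i _.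
    by have := unsplitK (inl i : 'I_k + 'I_k'); rewrite /= => ->.
  by have := unsplitK (inr i : 'I_k + 'I_k'); rewrite /= => ->.
- move=> c u Hc [k [a [b [Hi ->]]]]; exists k, (fun i => c * a i), b; split.
    by move=> i; case: (Hi i) => H1 H2; split => //; apply: HA.
  by rewrite mulr_sumr; apply: eq_bigr => i _; rewrite mulrA.
Qed.

Lemma prodI_monol A A' B : subI A A' -> subI (prodI A B) (prodI A' B).
Proof.
move=> H u [k [a [b [Hi ->]]]]; exists k, a, b; split => // i.
by case: (Hi i) => *; split => //; apply: H.
Qed.

Lemma prodI_monor A B B' : subI B B' -> subI (prodI A B) (prodI A B').
Proof.
move=> H u [k [a [b [Hi ->]]]]; exists k, a, b; split => // i.
by case: (Hi i) => *; split => //; apply: H.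
Qed.

Local Notation pw k := (powI O mP k).

Lemma pw_O k : subI (pw k) O.
Proof.
elim: k => [|k IH] //=; apply: prodI_sub => // a b Ha Hb.
by apply: OM; [exact: mPO|exact: IH].
Qed.

Lemma Mod_pw k : Mod (pw k).
Proof. by case: k => [|k] /=; [exact: Mod_O|apply: Mod_prodI]. Qed.

Lemma pw_mul k a b : mP a -> pw k b -> pw k.+1 (a * b).
Proof. exact: prodI_mul. Qed.

Lemma pw_S k : subI (pw k.+1) (pw k).
Proof.
elim: k => [|k IH] /=.
  by apply: prodI_sub => // a b Ha Hb; apply: OM => //; exact: mPO.
exact: prodI_monor.
Qed.

Lemma pw_le i j : (j <= i)%N -> subI (pw i) (pw j).
Proof.
move=> /subnK <-; elim: (i - j)%N => [|d IH] u Hu; first by rewrite add0n in Hu.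
by apply: IH; apply: pw_S; rewrite -addSn.
Qed.

Definition ired J := [/\ ideal_in O J, subI IX J & subI J mP].
Definition red J := ired J /\
  exists k, eqI (sumI (pw k.+1) IX) (sumI (prodI J (pw k)) IX).
Definition minred J := red J /\ forall J', red J' -> subI J' J -> subI J J'.

Lemma ired_Mod J : ired J -> Mod J.
Proof. by case=> [[]]. Qed.

Lemma red_eq J J' : eqI J J' -> red J -> red J'.
Proof.
move=> E [[[JO J0 JD JM] JIX Jm] [k Hk]]; split.
  split; first split.
  - by move=> u /E /JO.
  - exact/E.
  - by move=> u v /E Hu /E Hv; apply/E; apply: JD.
  - by move=> a u Ha /E Hu; apply/E; apply: JM.
  - by move=> u /JIX /E.
  - by move=> u /E /Jm.
exists k => u; rewrite Hk; split; case=> [a [b [Ha Hb ->]]]; exists a, b; split => //.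
  by apply: prodI_monol Ha => v /E.
by apply: prodI_monol Ha => v /E.
Qed.

Lemma nakayama N G : Mod N -> (forall g, g \in G -> sumI N (spanP mP G) g) ->
  forall g, g \in G -> N g.
Proof.
move=> HN; have [N0 ND NM] := HN.
elim: G => [//|a G IH] H.
have [n [w [Hn [mu [Hmu Hw]] Ha]]] := H a (mem_head a G).
set w' := w - mu * a in Hw.
have HuO : O (1 - mu) by apply: OD => //; apply: (ModN Mod_O); exact: mPO.
have Hum : ~ mP (1 - mu).
  by move=> Hm; apply: mP1; have := mPD Hm Hmu; rewrite subrK.
have [Hv Hnz] := Ounit HuO Hum.
have E1 : (1 - mu) * a = n + w'.
  by rewrite /w'; transitivity (a - mu * a); [ring|rewrite {1}Ha; ring].
have Ea : a = (1 - mu)^-1 * n + (1 - mu)^-1 * w'.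
  by rewrite -mulrDr -E1 mulrA mulVf // mul1r.
have HG : forall g, g \in G -> N g.
  apply: IH => g Hg.
  have [ng [wg [Hng [mug [Hmug Hwg]] ->]]] := H g ltac:(by rewrite inE Hg orbT).
  exists (ng + (mug * (1 - mu)^-1) * n),
         ((wg - mug * a) + (mug * (1 - mu)^-1) * w').
  split.
  - by apply: ND => //; apply: NM => //; apply: OM => //; exact: mPO.
  - case: (Mod_span G Mod_mP) => _ SD SM.
    by apply: SD => //; apply: SM => //; apply: OM => //; exact: mPO.
  - rewrite [in LHS](_ : wg = wg - mug * a + mug * ((1 - mu)^-1 * n + (1 - mu)^-1 * w')).
      by ring.
    by rewrite -Ea; ring.
move=> g; rewrite inE => /orP [/eqP ->|]; last exact: HG.
rewrite Ea; apply: ND; apply: NM => //.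
by apply: (span_sub HN mPO HG).
Qed.

Definition fg A := exists G, (forall g, g \in G -> A g) /\ subI A (spanP O G).

Lemma span_mulr S GB g b : Mod S -> (forall h, h \in GB -> S (g * h)) ->
  spanP O GB b -> S (g * b).
Proof.
move=> [S0 SD SM]; elim: GB b => [|h GB IH] b Hh /=; first by move->; rewrite mulr0.
move=> [d [Hd Hb]]; have -> : g * b = d * (g * h) + g * (b - d * h) by ring.
apply: SD; first by apply: SM => //; apply: Hh; exact: mem_head.
by apply: IH => // h' H'; apply: Hh; rewrite inE H' orbT.
Qed.

Lemma span_mulP S GA GB a b : Mod S -> (forall g h, g \in GA -> h \in GB -> S (g * h)) ->
  spanP O GA a -> spanP O GB b -> S (a * b).
Proof.
move=> HS; have [S0 SD SM] := HS.
elim: GA a => [|g GA IH] a HG /=; first by move=> -> _; rewrite mul0r.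
move=> [c [Hc Ha]] Hb; have -> : a * b = c * (g * b) + (a - c * g) * b by ring.
apply: SD; last by apply: IH => // g' h Hg' Hh; apply: HG => //; rewrite inE Hg' orbT.
apply: SM => //; apply: (span_mulr HS _ Hb) => h Hh; apply: HG => //; exact: mem_head.
Qed.

Lemma fg_prod A B : fg A -> fg B -> fg (prodI A B).
Proof.
move=> [GA [HGA HA]] [GB [HGB HB]]; exists [seq g * h | g <- GA, h <- GB]; split.
  move=> z /allpairsP [[g h] [/= Hg Hh ->]].
  by apply: prodI_mul; [apply: HGA|apply: HGB].
have [S0 SD SM] := Mod_span [seq g * h | g <- GA, h <- GB] Mod_O.
apply: prodI_sub => // a b Ha Hb.
apply: (span_mulP (Mod_span _ Mod_O)) (HA _ Ha) (HB _ Hb) => g h Hg Hh.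
by apply: span_mem; apply: allpairs_f.
Qed.

Lemma fg_O : fg O.
Proof.
exists [:: 1]; split; first by move=> g; rewrite inE => /eqP ->.
by move=> u Hu /=; exists u; split => //; rewrite mulr1 subrr.
Qed.

Hypothesis fgmP : fg mP.

Lemma fg_pw k : fg (pw k).
Proof. by elim: k => [|k IH] /=; [exact: fg_O|exact: fg_prod]. Qed.

Definition SX s := sumI (spanP O s) IX.

Lemma Mod_SX s : Mod (SX s).
Proof. exact: Mod_sum (Mod_span _ Mod_O) Mod_IX. Qed.

Lemma SX_mem s g : g \in s -> SX s g.
Proof. by move=> H; apply: sumIl Mod_IX _; apply: span_mem. Qed.

Lemma SX_sub s1 s2 : (forall g, g \in s1 -> SX s2 g) -> subI (SX s1) (SX s2).
Proof.
move=> H; apply: sum_sub (Mod_SX s2) _ _; first exact: span_subO (Mod_SX s2) H.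
by move=> u Hu; apply: sumIr (Mod_span _ Mod_O) Hu.
Qed.

Lemma span_cat1 p q z : spanP O (p ++ q) z ->
  exists v w, [/\ spanP O p v, spanP O q w & z = v + w].
Proof.
elim: p z => [|g p IH] z /=; first by move=> Hz; exists 0, z; rewrite add0r.
move=> [c [Hc /IH [v [w [Hv Hw E]]]]]; exists (v + c * g), w; split => //.
  by exists c; split => //; rewrite addrK.
by rewrite -[z](subrK (c * g)) E; ring.
Qed.

Lemma span_cat2 p q v w : spanP O p v -> spanP O q w -> spanP O (p ++ q) (v + w).
Proof.
have [_ SD _] := Mod_span (p ++ q) Mod_O.
move=> Hv Hw; apply: SD.
  by apply: span_mono Hv => g Hg; rewrite mem_cat Hg.
by apply: span_mono Hw => g Hg; rewrite mem_cat Hg orbT.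
Qed.

Lemma spanmP_mul q w b k : (forall v, v \in q -> mP v) -> spanP mP q w -> pw k b ->
  pw k.+2 (w * b).
Proof.
have [P0 PD PM] := Mod_pw k.+2.
elim: q w => [|g q IH] w Hq /=; first by move=> -> _; rewrite mul0r.
move=> [mu [Hmu Hw]] Hb; have -> : w * b = g * (mu * b) + (w - mu * g) * b by ring.
apply: PD; last by apply: IH => // v Hv; apply: Hq; rewrite inE Hv orbT.
by apply: pw_mul; [apply: Hq; exact: mem_head|exact: pw_mul].
Qed.

Lemma mP_span_mul G a c : mP a -> spanP O G c -> spanP mP G (a * c).
Proof.
move=> Ha; elim: G c => [|g G IH] c /=; first by move->; rewrite mulr0.
move=> [d [Hd Hc]]; exists (a * d); split; first by rewrite mulrC; apply: mPM.
by have := IH _ Hc; congr spanP; ring.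
Qed.

Lemma caseB (J' : F -> Prop) p q : red J' -> (forall v, v \in p -> mP v) -> (forall v, v \in q -> mP v) ->
  (forall j, J' j -> exists v w i, [/\ spanP O p v, spanP mP q w, IX i & j = v + w + i]) ->
  red (SX p).
Proof.
move=> [[HJi HJIX HJm] [k Hk]] Hp Hq Hdec.
have Spm : subI (spanP O p) mP by apply: span_subO Mod_mP Hp.
have HMSX := Mod_SX p; have [X0 XD XM] := HMSX.
split.
  split; first split.
  - apply: sum_sub Mod_O _ _; first by move=> u /Spm; apply: mPO.
    by move=> u /IXmP /mPO.
  - exact: X0.
  - exact: XD.
  - exact: XM.
  - by move=> u Hu; apply: sumIr (Mod_span _ Mod_O) Hu.
  - exact: sum_sub Mod_mP Spm IXmP.
exists k => u; split.
  have HP : Mod (prodI (SX p) (pw k)) by apply: Mod_prodI.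
  set N := sumI (prodI (SX p) (pw k)) IX.
  have HN : Mod N by apply: Mod_sum HP Mod_IX.
  have [N0 ND NM] := HN.
  have [G [HG1 HG2]] := fg_pw k.+1.
  have HG : forall g, g \in G -> N g.
    apply: (nakayama HN) => g Hg.
    have Hgs : sumI (pw k.+1) IX g by apply: sumIl Mod_IX _; apply: HG1.
    have Hg2 := (Hk g).1 Hgs.
    have HT : Mod (sumI N (spanP mP G)) by apply: Mod_sum HN (Mod_span _ Mod_mP).
    have [T0 TD TM] := HT.
    move: Hg2; apply: (sum_sub HT).
      apply: prodI_sub => // j b Hj Hb.
      have [v [w [i [Hv Hw Hi ->]]]] := Hdec j Hj.
      rewrite !mulrDl; apply: (TD); first apply: (TD).
      - apply: sumIl (Mod_span _ Mod_mP) _; apply: sumIl Mod_IX _.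
        by apply: prodI_mul => //; apply: sumIl Mod_IX Hv.
      - apply: sumIr HN _.
        have Hw2 := spanmP_mul Hq Hw Hb.
        move: Hw2; apply: prodI_sub.
        + by case: (Mod_span G Mod_mP).
        + by case: (Mod_span G Mod_mP).
        + by move=> a c Ha Hc; apply: mP_span_mul => //; apply: HG2.
      - apply: sumIl (Mod_span _ Mod_mP) _; apply: sumIr HP _.
        by rewrite mulrC; apply: IXM => //; exact: (pw_O Hb).
    by move=> i Hi; apply: sumIl (Mod_span _ Mod_mP) _; apply: sumIr HP _.
  have Hpw : subI (pw k.+1) N.
    by move=> z Hz; exact: (span_subO HN HG (HG2 z Hz)).
  by move=> Hu; exact: (sum_sub HN Hpw (fun i Hi => sumIr HP Hi) Hu).
have HT : Mod (sumI (pw k.+1) IX) by apply: Mod_sum (Mod_pw _) Mod_IX.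
have [T0 TD TM] := HT.
move=> Hu; apply: (sum_sub HT _ (fun i Hi => sumIr (Mod_pw _) Hi) Hu).
apply: prodI_sub => // a b [v [i [Hv Hi ->]]] Hb; rewrite mulrDl; apply: TD.
  by apply: sumIl Mod_IX _; apply: pw_mul => //; apply: Spm.
by apply: sumIr (Mod_pw _) _; rewrite mulrC; apply: IXM => //; exact: (pw_O Hb).
Qed.

Lemma decomp q w : spanP O q w ->
  (exists q1 a q2 c, [/\ q = q1 ++ a :: q2, O c, ~ mP c & spanP O (q1 ++ q2) (w - c * a)])
  \/ spanP mP q w.
Proof.
elim: q w => [|a q IH] w /=; first by right.
move=> [c [Hc Hw]]; case: (classic (mP c)) => Hmc; last first.
  by left; exists [::], a, q, c.
case: (IH _ Hw) => [[q1 [b [q2 [c' [Eq Hc' Hnc' Hs]]]]]|Hr]; last by right; exists c.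
left; exists (a :: q1), b, q2, c'; split => //; first by rewrite Eq.
by exists c; split => //; move: Hs; congr spanP; ring.
Qed.

Lemma exch (J' : F -> Prop) : red J' -> forall n p q, size q = n -> (forall v, v \in p -> J' v) ->
  subI J' (SX (p ++ q)) -> (forall v, v \in p ++ q -> mP v) ->
  subI (SX (p ++ q)) J' \/
  exists s', [/\ (size s' < size (p ++ q))%N, red (SX s') & subI (SX s') (SX (p ++ q))].
Proof.
move=> HJ; have [HJi HJk] := HJ; have [HJid HJIX HJm] := HJi.
have HJM := ired_Mod HJi.
elim=> [|n IH] p q Hsz Hp HJq Hm.
  move/eqP: Hsz; rewrite size_eq0 => /eqP Eq; subst q; rewrite cats0.
  by left; apply: (sum_sub HJM (span_subO HJM Hp) HJIX).
case: (classic (exists c q1 a q2 u, [/\ J' c, q = q1 ++ a :: q2, O u, ~ mP u &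
           SX (p ++ q1 ++ q2) (c - u * a)])).
  move=> [c [q1 [a [q2 [u [Hc Eq Hu Hnu Hs]]]]]].
  have [Hui Hu0] := Ounit Hu Hnu.
  have Eqv : eqI (SX ((c :: p) ++ (q1 ++ q2))) (SX (p ++ q)).
    move=> z; split; apply: SX_sub => g.
      rewrite /= inE => /orP [/eqP ->|Hg]; first exact: HJq.
      apply: SX_mem; move: Hg; rewrite Eq !mem_cat inE.
      by case/orP => [->//|/orP [->|->]]; rewrite ?orbT.
    rewrite Eq !mem_cat inE.
    have Hsub : forall g, g \in p ++ q1 ++ q2 -> SX (c :: p ++ q1 ++ q2) g.
      by move=> g' Hg'; apply: SX_mem; rewrite inE Hg' orbT.
    case/orP => [Hg|/orP [Hg|/orP [/eqP ->|Hg]]]; try (apply: Hsub; rewrite !mem_cat Hg ?orbT //).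
    have -> : a = u^-1 * (c - (c - u * a)) by rewrite opprB addrC subrK mulrA mulVf ?mul1r.
    have [_ _ XM] := Mod_SX (c :: p ++ q1 ++ q2).
    apply: XM => //; apply: ModB (Mod_SX _) _ _; first by apply: SX_mem; exact: mem_head.
    exact: (SX_sub Hsub).
  have Hsz' : size (q1 ++ q2) = n.
    by move: Hsz; rewrite Eq !size_cat /=; lia.
  have Hsize : size ((c :: p) ++ q1 ++ q2) = size (p ++ q).
    by rewrite Eq /= !size_cat /=; lia.
  case: (IH (c :: p) (q1 ++ q2) Hsz' _ _ _).
  - by move=> v; rewrite inE => /orP [/eqP ->//|]; apply: Hp.
  - by move=> v /HJq /Eqv.
  - move=> v; rewrite /= inE => /orP [/eqP ->|Hv]; first exact: HJm.
    apply: Hm; move: Hv; rewrite Eq !mem_cat inE.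
    by case/orP => [->//|/orP [->|->]]; rewrite ?orbT.
  - by move=> H; left => v /Eqv /H.
  - move=> [s' [Hs1 Hs2 Hs3]]; right; exists s'; split => //.
      by rewrite -Hsize.
    by move=> v /Hs3 /Eqv.
move=> HnA; right; exists p; split.
- by rewrite size_cat Hsz addnS ltnS leq_addr.
- apply: (caseB (q:=q) HJ).
  + by move=> v Hv; apply: Hm; rewrite mem_cat Hv.
  + by move=> v Hv; apply: Hm; rewrite mem_cat Hv ?orbT.
  + move=> j Hj; have [z [i [Hz Hi Ej]]] := HJq j Hj.
    have [v [w [Hv Hw Ez]]] := span_cat1 Hz.
    case: (decomp Hw) => [[q1 [a [q2 [c [Eq Hc Hnc Hs]]]]]|Hw']; last first.
      by exists v, w, i; split => //; rewrite Ej Ez.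
    exfalso; apply: HnA; exists j, q1, a, q2, c; split => //.
    exists (v + (w - c * a)), i; split => //; first exact: span_cat2.
    by rewrite Ej Ez; ring.
- by apply: SX_sub => g Hg; apply: SX_mem; rewrite mem_cat Hg.
Qed.

Lemma step s : red (SX s) -> ~ minred (SX s) ->
  exists s', [/\ (size s' < size s)%N, red (SX s') & subI (SX s') (SX s)].
Proof.
move=> Hr Hmin.
have [J' [HJ' Hsub Hn]] : exists J', [/\ red J', subI J' (SX s) & ~ subI (SX s) J'].
  apply: NNPP => Hne; apply: Hmin; split => // J' HJ' Hsub; apply: NNPP => Hn.
  by apply: Hne; exists J'; split.
have Hm : forall v, v \in s -> mP v.
  by move=> v Hv; case: Hr => [[_ _ Hm]] _; apply: Hm; apply: SX_mem.
case: (exch HJ' (erefl (size s)) (p := [::]) _ Hsub Hm) => // H.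
Qed.

Lemma exists_min (J0 : F -> Prop) n s : (size s <= n)%N -> red (SX s) -> subI (SX s) J0 ->
  exists J, minred J /\ subI J J0.
Proof.
elim: n s => [|n IH] s Hs Hr HJ0; (case: (classic (minred (SX s))) => Hmin;
  first by exists (SX s)); have [s' [Hs' Hr' Hsub]] := step Hr Hmin.
  by exfalso; lia.
apply: (IH _ _ Hr'); first by lia.
by move=> u /Hsub /HJ0.
Qed.

Lemma main_abstract (J0 : F -> Prop) s m : red (SX s) -> eqI (SX s) J0 -> (0 < m)%N ->
  (forall J, minred J -> subI (pw m) J) -> forall i, ~ subI (pw i) J0 -> (i <= m.-1)%N.
Proof.
move=> Hr E Hm Hmin i Hi.
have [J [HJ HJJ0]] := exists_min (leqnn _) Hr (fun u H => (E u).1 H).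
case: (leqP i m.-1) => // Hlt; exfalso; apply: Hi => u Hu.
apply: HJJ0; apply: Hmin => //; apply: pw_le Hu.
by move: Hlt; case: m Hm.
Qed.

Lemma genI_span k (g : 'I_k -> F) : eqI (spanP O [seq g i | i <- enum 'I_k]) (genI O g).
Proof.
have HG : Mod (genI O g).
  split.
  - by exists (fun _ => 0); split => //; rewrite big1 // => i _; rewrite mul0r.
  - move=> u v [c [Hc ->]] [c' [Hc' ->]]; exists (fun i => c i + c' i); split.
      by move=> i; apply: OD.
    by rewrite -big_split; apply: eq_bigr => i _; rewrite mulrDl.
  - move=> a u Ha [c [Hc ->]]; exists (fun i => a * c i); split.
      by move=> i; apply: OM.
    by rewrite mulr_sumr; apply: eq_bigr => i _; rewrite mulrA.
move=> u; split.
  apply: span_subO HG _ u => z /mapP [i _ ->].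
  exists (fun l => if l == i then 1 else 0); split; first by move=> l; case: ifP.
  rewrite (bigD1 i) //= eqxx mul1r big1 ?addr0 // => l /negbTE ->.
  by rewrite mul0r.
move=> [c [Hc ->]]; have [S0 SD SM] := Mod_span [seq g i | i <- enum 'I_k] Mod_O.
apply: big_ind => // i _; apply: SM => //; apply: span_mem.
by rewrite map_f // mem_enum.
Qed.

Lemma genI_SX k (g : 'I_k -> F) : eqI (SX [seq g i | i <- enum 'I_k]) (sumI (genI O g) IX).
Proof.
move=> u; split; move=> [a [b [Ha Hb ->]]]; exists a, b; split => //; exact/genI_span.
Qed.

End Abstract.

End Gen.

Module Conc.
Import Gen.
Set Implicit Arguments.
Unset Strict Implicit.
Lemma mmap_homog (K : ringType) (S : comRingType) n (f : K -> S) (h : 'I_n -> S) (lam : S)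
    d (p : {mpoly K[n]}) :
  p \is d.-homog -> mmap f (fun i => lam * h i) p = lam ^+ d * mmap f h p.
Proof.
move=> Hp; rewrite /mmap mulr_sumr; apply: eq_big_seq => m Hm.
rewrite /mmap1 (eq_bigr (fun i => lam ^+ m i * h i ^+ m i)); last by move=> i _; rewrite exprMn.
rewrite big_split /= prodrXr -mdegE (dhomog_mf Hp Hm).
by rewrite mulrCA.
Qed.

Section Concrete.
Variables (K : fieldType) (n : nat) (Fr : fieldType).
Variable tf : {rmorphism {mpoly K[n]} -> Fr}.
Hypothesis tf_inj : injective tf.
Variable kap : {rmorphism K -> Fr}.
Hypothesis kapE : forall c, kap c = tf (c%:MP).
Variable I : pred {mpoly K[n]}.
Hypothesis I0 : 0 \in I.
Hypothesis ID : forall f g, f \in I -> g \in I -> f + g \in I.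
Hypothesis IM : forall a f, f \in I -> a * f \in I.
Variable x : 'I_n -> K.
Variable j : 'I_n.
Hypothesis Hj : x j != 0.
Hypothesis HIx : forall f, f \in I -> f.@[x] = 0.
Implicit Types (f g : {mpoly K[n]}).

Definition cO (u : Fr) : Prop :=
  exists (d : nat) (f g : {mpoly K[n]}),
    [/\ f \is d.-homog, g \is d.-homog, g.@[x] != 0 & u = tf f / tf g].
Definition cmP (u : Fr) : Prop :=
  exists (d : nat) (f g : {mpoly K[n]}),
    [/\ f \is d.-homog, g \is d.-homog, g.@[x] != 0, f.@[x] = 0 & u = tf f / tf g].
Definition cIX (u : Fr) : Prop :=
  exists (d : nat) (f g : {mpoly K[n]}),
    [/\ f \is d.-homog, g \is d.-homog, g.@[x] != 0, f \in I & u = tf f / tf g].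

Lemma tf_neq0 g : g.@[x] != 0 -> tf g != 0.
Proof.
move=> Hg; apply/eqP => H; move: Hg.
have -> : g = 0 by apply: tf_inj; rewrite H rmorph0.
by rewrite meval0 eqxx.
Qed.

Lemma homogC c : (c%:MP : {mpoly K[n]}) \is 0.-homog.
Proof. by rewrite -[c%:MP]mulr1 mul_mpolyC; apply: dhomogZ; apply: dhomog1. Qed.

Lemma homogXi i : ('X_i : {mpoly K[n]}) \is 1.-homog.
Proof. by rewrite dhomogX; apply/eqP; apply: mdeg1. Qed.

Lemma hD d e f g (f' g' : {mpoly K[n]}) : f \is d.-homog -> g \is d.-homog -> f' \is e.-homog -> g' \is e.-homog ->
  f * g' + f' * g \is (d + e).-homog.
Proof.
move=> Hf Hg Hf' Hg'; apply: dhomogD; first exact: dhomogM.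
by rewrite addnC; apply: dhomogM.
Qed.

Lemma evM f g : g.@[x] != 0 -> f.@[x] != 0 -> (g * f).@[x] != 0.
Proof. by move=> H1 H2; rewrite mevalM mulf_neq0. Qed.

Lemma cO0 : cO 0.
Proof.
exists 0%N, 0, 1; split; [exact: dhomog0|exact: dhomog1| |].
  by rewrite meval1 oner_neq0.
by rewrite rmorph0 mul0r.
Qed.

Lemma cO1 : cO 1.
Proof.
exists 0%N, 1, 1; split; [exact: dhomog1|exact: dhomog1| |].
  by rewrite meval1 oner_neq0.
by rewrite rmorph1 divr1.
Qed.

Lemma cON1 : cO (-1).
Proof.
exists 0%N, (-1), 1; split; [by rewrite dhomogN; exact: dhomog1|exact: dhomog1| |].
  by rewrite meval1 oner_neq0.
by rewrite rmorph1 divr1 rmorphN rmorph1.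
Qed.

Lemma addE f g (f' g' : {mpoly K[n]}) : g.@[x] != 0 -> g'.@[x] != 0 ->
  tf f / tf g + tf f' / tf g' = tf (f * g' + f' * g) / tf (g * g').
Proof.
move=> /tf_neq0 H1 /tf_neq0 H2; rewrite rmorphD !rmorphM.
by field; rewrite H1 H2.
Qed.

Lemma mulE f g (f' g' : {mpoly K[n]}) : tf f / tf g * (tf f' / tf g') = tf (f * f') / tf (g * g').
Proof. by rewrite !rmorphM invfM mulrACA. Qed.

Lemma cOD u v : cO u -> cO v -> cO (u + v).
Proof.
move=> [d [f [g [Hf Hg Hgx ->]]]] [e [f' [g' [Hf' Hg' Hgx' ->]]]].
exists (d + e)%N, (f * g' + f' * g), (g * g'); split.
- exact: hD.
- exact: dhomogM.
- by rewrite mevalM mulf_neq0.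
- exact: addE.
Qed.

Lemma cOM u v : cO u -> cO v -> cO (u * v).
Proof.
move=> [d [f [g [Hf Hg Hgx ->]]]] [e [f' [g' [Hf' Hg' Hgx' ->]]]].
exists (d + e)%N, (f * f'), (g * g'); split.
- exact: dhomogM.
- exact: dhomogM.
- by rewrite mevalM mulf_neq0.
- exact: mulE.
Qed.

Lemma cmPO u : cmP u -> cO u.
Proof. by move=> [d [f [g [Hf Hg Hgx _ ->]]]]; exists d, f, g. Qed.

Lemma cmP0 : cmP 0.
Proof.
exists 0%N, 0, 1; split; [exact: dhomog0|exact: dhomog1| | |].
- by rewrite meval1 oner_neq0.
- by rewrite meval0.
- by rewrite rmorph0 mul0r.
Qed.

Lemma cmPD u v : cmP u -> cmP v -> cmP (u + v).
Proof.
move=> [d [f [g [Hf Hg Hgx Hfx ->]]]] [e [f' [g' [Hf' Hg' Hgx' Hfx' ->]]]].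
exists (d + e)%N, (f * g' + f' * g), (g * g'); split.
- exact: hD.
- exact: dhomogM.
- by rewrite mevalM mulf_neq0.
- by rewrite mevalD !mevalM Hfx Hfx' !mul0r addr0.
- exact: addE.
Qed.

Lemma cmPM a u : cO a -> cmP u -> cmP (a * u).
Proof.
move=> [d [f [g [Hf Hg Hgx ->]]]] [e [f' [g' [Hf' Hg' Hgx' Hfx' ->]]]].
exists (d + e)%N, (f * f'), (g * g'); split.
- exact: dhomogM.
- exact: dhomogM.
- by rewrite mevalM mulf_neq0.
- by rewrite mevalM Hfx' mulr0.
- exact: mulE.
Qed.

Lemma cmP1 : ~ cmP 1.
Proof.
move=> [d [f [g [Hf Hg Hgx Hfx E]]]].
have Hg0 := tf_neq0 Hgx.
have : tf g = tf f by have := congr1 (fun z => z * tf g) E; rewrite mul1r mulfVK.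
move/tf_inj => Efg; move: Hgx; by rewrite Efg Hfx eqxx.
Qed.

Lemma cOunit u : cO u -> ~ cmP u -> cO u^-1 /\ u != 0.
Proof.
move=> [d [f [g [Hf Hg Hgx Eu]]]] Hn.
have Hfx : f.@[x] != 0.
  by apply/eqP => Hfx; apply: Hn; exists d, f, g.
split.
  by exists d, g, f; split => //; rewrite Eu invf_div.
by rewrite Eu mulf_neq0 // ?invr_eq0 tf_neq0.
Qed.

Lemma cIXmP u : cIX u -> cmP u.
Proof. by move=> [d [f [g [Hf Hg Hgx HfI ->]]]]; exists d, f, g; split => //; apply: HIx. Qed.

Lemma cIX0 : cIX 0.
Proof.
exists 0%N, 0, 1; split; [exact: dhomog0|exact: dhomog1| | |] => //.
- by rewrite meval1 oner_neq0.
- by rewrite rmorph0 mul0r.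
Qed.

Lemma cIXD u v : cIX u -> cIX v -> cIX (u + v).
Proof.
move=> [d [f [g [Hf Hg Hgx Hfx ->]]]] [e [f' [g' [Hf' Hg' Hgx' Hfx' ->]]]].
exists (d + e)%N, (f * g' + f' * g), (g * g'); split.
- exact: hD.
- exact: dhomogM.
- by rewrite mevalM mulf_neq0.
- by apply: ID; rewrite mulrC; apply: IM.
- exact: addE.
Qed.

Lemma cIXM a u : cO a -> cIX u -> cIX (a * u).
Proof.
move=> [d [f [g [Hf Hg Hgx ->]]]] [e [f' [g' [Hf' Hg' Hgx' Hfx' ->]]]].
exists (d + e)%N, (f * f'), (g * g'); split.
- exact: dhomogM.
- exact: dhomogM.
- by rewrite mevalM mulf_neq0.
- exact: IM.
- exact: mulE.
Qed.

Definition cc i := (x j)^-1 * x i.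
Definition hh i := (tf 'X_j)^-1 * tf 'X_i.
Definition tt i := hh i - kap (cc i).

Lemma tfX_neq0 : tf 'X_j != 0.
Proof. by apply: tf_neq0; rewrite mevalXU. Qed.

Lemma tfC_neq0 : tf (x j)%:MP != 0.
Proof. by apply: tf_neq0; rewrite mevalC. Qed.

Lemma tt_mP i : cmP (tt i).
Proof.
exists 1%N, ((x j)%:MP * 'X_i - (x i)%:MP * 'X_j), ((x j)%:MP * 'X_j); split.
- have Hh : forall c k, (c%:MP * 'X_k : {mpoly K[n]}) \is 1.-homog.
    by move=> c k; have := dhomogM (homogC c) (homogXi k); rewrite add0n.
  by apply: dhomogD; [exact: Hh|rewrite dhomogN; exact: Hh].
- by have := dhomogM (homogC (x j)) (homogXi j); rewrite add0n.
- by rewrite mevalM mevalC mevalXU mulf_neq0.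
- by rewrite mevalB !mevalM !mevalC !mevalXU mulrC subrr.
- rewrite /tt /hh /cc rmorphM fmorphV !kapE rmorphB !rmorphM.
  have H1 := tfX_neq0; have H2 := tfC_neq0.
  by field; rewrite H1 H2.
Qed.

Definition GG := [seq tt i | i <- enum 'I_n].

Lemma HMO : Mod cO cO.
Proof. by split; [exact: cO0|exact: cOD|move=> a u; exact: cOM]. Qed.

Lemma kapO c : cO (kap c).
Proof.
exists 0%N, c%:MP, 1; split; [exact: homogC|exact: dhomog1| |].
  by rewrite meval1 oner_neq0.
by rewrite kapE rmorph1 divr1.
Qed.

Lemma hhO i : cO (hh i).
Proof.
exists 1%N, 'X_i, 'X_j; split; [exact: homogXi|exact: homogXi| |].
  by rewrite mevalXU.
by rewrite /hh mulrC.
Qed.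

Definition Rel a b := [/\ cO a, cO b & spanP cO GG (a - b)].

Lemma Rel_mul a1 b1 a2 b2 : Rel a1 b1 -> Rel a2 b2 -> Rel (a1 * a2) (b1 * b2).
Proof.
move=> [Ha1 Hb1 H1] [Ha2 Hb2 H2]; split; [exact: cOM|exact: cOM|].
have [S0 SD SM] := Mod_span GG HMO.
have -> : a1 * a2 - b1 * b2 = a1 * (a2 - b2) + b2 * (a1 - b1) by ring.
by apply: SD; apply: SM.
Qed.

Lemma Rel1 : Rel 1 1.
Proof. by split; [exact: cO1|exact: cO1|rewrite subrr; case: (Mod_span GG HMO)]. Qed.

Lemma Rel_exp a b k : Rel a b -> Rel (a ^+ k) (b ^+ k).
Proof.
move=> H; elim: k => [|k IH]; first by rewrite !expr0; exact: Rel1.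
by rewrite !exprS; apply: Rel_mul.
Qed.

Lemma Rel_base i : Rel (hh i) (kap (cc i)).
Proof.
split; [exact: hhO|exact: kapO|].
apply: (span_mem cO0 cO1 cOD cOM); rewrite -/(tt i).
by rewrite map_f // mem_enum.
Qed.

Lemma Dlem p : spanP cO GG (mmap kap hh p - kap (p.@[cc])).
Proof.
have [S0 SD SM] := Mod_span GG HMO.
elim/mpolyind: p => [|c m p _ _ IH].
  by rewrite mmap0 meval0 rmorph0 subrr.
rewrite mmapD mmapZ mmapX mevalD mevalZ mevalX rmorphD rmorphM rmorph_prod.
rewrite (eq_bigr (fun i => kap (cc i) ^+ m i)); last by move=> i _; rewrite rmorphXn.
set P1 := mmap1 hh m; set P2 := \prod_(i < n) _.
have HR : Rel P1 P2.
  rewrite /P1 /P2 /mmap1; apply: (big_ind2 Rel Rel1 Rel_mul) => i _.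
  by apply: Rel_exp; apply: Rel_base.
have -> : kap c * P1 + mmap kap hh p - (kap c * P2 + kap p.@[cc]) =
  kap c * (P1 - P2) + (mmap kap hh p - kap p.@[cc]) by ring.
by apply: SD => //; apply: SM; [exact: kapO|case: HR].
Qed.

Lemma mmap_tf f : mmap kap (fun i => tf 'X_i) f = tf f.
Proof.
rewrite [in RHS](mpolyE f) rmorph_sum /mmap; apply: eq_bigr => m _.
rewrite -mul_mpolyC rmorphM kapE mpolyXE_id rmorph_prod /mmap1; congr (_ * _).
by apply: eq_bigr => i _; rewrite rmorphXn.
Qed.

Lemma cmP_span u : cmP u -> spanP cO GG u.
Proof.
move=> [d [f [g [Hf Hg Hgx Hfx ->]]]].
have [S0 SD SM] := Mod_span GG HMO.
have E1 : mmap kap hh f = (tf 'X_j)^-1 ^+ d * tf f.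
  by rewrite /hh (mmap_homog kap (fun i => tf 'X_i) _ Hf) mmap_tf.
have E2 : f.@[cc] = 0.
  transitivity ((x j)^-1 ^+ d * f.@[x]); first exact: (mmap_homog idfun x _ Hf).
  by rewrite Hfx mulr0.
have HD := Dlem f; rewrite E2 rmorph0 subr0 E1 in HD.
have -> : tf f / tf g = (tf ('X_j ^+ d) / tf g) * ((tf 'X_j)^-1 ^+ d * tf f).
  have H1 := expf_neq0 d tfX_neq0; have H2 := tf_neq0 Hgx.
  rewrite rmorphXn exprVn; by field; rewrite H1 H2.
apply: SM => //; exists d, ('X_j ^+ d), g; split => //.
by have := dhomogMn d (homogXi j); rewrite mul1n.
Qed.

Lemma fg_cmP : fg cO cmP.
Proof.
exists GG; split; last exact: cmP_span.
by move=> g /mapP [i _ ->]; exact: tt_mP.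
Qed.

End Concrete.

End Conc.

Unset Implicit Arguments.
Set Strict Implicit.

Theorem lemma3p4 (R : realType) (r : nat) (I : pred {mpoly (complex R)[r.+1]})
    (x : 'I_r.+1 -> complex R) (m : nat) (k : nat)
    (l : 'I_k -> {mpoly (complex R)[r.+1]}) :
  projective_variety I ->
  point_of I x ->
  (0 < m)%N ->
  (forall J, minimal_reductionX I x J ->
     subI (powI (loc_ring x) (loc_max x) m) J) ->
  reduction_linear_subspace I x l ->
  loewy_length_le x (lin_idealX I x l) m.-1.
Proof.
move=> [[[HI0 HID HIM] _] _] [[j Hj] HIx] Hm Hmin [_ Hred].
pose tf := GRing.RMorphism.clone _ _ (@FracField.tofrac (homcoord R r)) _.
pose kap := GRing.RMorphism.clone _ _ ((@FracField.tofrac (homcoord R r)) \o (@mpolyC r.+1 (complex R))) _.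
have tf_inj : injective tf by move=> a b /eqP; rewrite tofrac_eq => /eqP.
have kapE : forall c, kap c = tf (c%:MP) by [].
pose F := fracfield R r.
pose O := @Conc.cO _ _ F tf x.
pose mP := @Conc.cmP _ _ F tf x.
pose IX := @Conc.cIX _ _ F tf I x.
pose g := fun i => lbar x (l i).
pose s := [seq g i | i <- enum 'I_k].
have HSX : Gen.eqI (Gen.SX O IX s) (Gen.sumI (Gen.genI O g) IX).
  exact: (Gen.genI_SX IX (Conc.cO0 tf x) (Conc.cO1 tf x) (Conc.cOD tf_inj (x:=x)) (Conc.cOM (x:=x))).
have Hred' : Gen.red O mP IX (Gen.SX O IX s).
  apply: (Gen.red_eq (J := sumI (genI O g) IX)); first by move=> u; split => /HSX.
  exact: Hred.
have := @Gen.main_abstract F O mP IX (Conc.cO0 tf x) (Conc.cO1 tf x) (Conc.cON1 tf x)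
  (Conc.cOD tf_inj (x:=x)) (Conc.cOM (x:=x)) (@Conc.cmPO _ _ _ tf x) (Conc.cmP0 tf x)
  (Conc.cmPD tf_inj (x:=x)) (Conc.cmPM (x:=x)) (Conc.cmP1 tf_inj (x:=x)) (Conc.cOunit tf_inj (x:=x))
  (Conc.cIXmP HIx) (Conc.cIX0 tf HI0 x) (Conc.cIXD tf_inj HID HIM (x:=x)) (Conc.cIXM HIM (x:=x))
  (Conc.fg_cmP tf_inj kapE Hj) (lin_idealX I x l) s m Hred' HSX Hm Hmin.
exact.
Qed.
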